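(* Let $a,b,c,n_1,n_2,n_3,\ell$ be integers with $n_1a+n_2b+n_3c=0$ and $n_1^2+n_2^2+n_3^2=\ell^2$, and put $u'=(a,b,c)$, $n=(n_1,n_2,n_3)$. Then there exists $v=(a',b',c')\in\mathbb{Z}^3$ such that $\ell u'$ and $v$ define a lattice square in the plane with normal $n$; that is, $v\cdot n=0$, $v\cdot(\ell u')=0$ and $|v|=|\ell u'|$.
   Context: $\cdot$ and $|\cdot|$ denote the standard dot product and Euclidean norm in $\mathbb{R}^3$. *)

(* Defs.v *)
From Stdlib Require Import ZArith.
Open Scope Z_scope.

Definition dot3 (x y : Z * Z * Z) : Z :=
  let '(x1, x2, x3) := x in let '(y1, y2, y3) := y in
  x1 * y1 + x2 * y2 + x3 * y3.

Definition norm2 (x : Z * Z * Z) : Z := dot3 x x.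

Definition scale3 (k : Z) (x : Z * Z * Z) : Z * Z * Z :=
  let '(x1, x2, x3) := x in (k * x1, k * x2, k * x3).

(* Main.v *)
Require Import Defs.
From Stdlib Require Import ZArith Lia Psatz.
Open Scope Z_scope.

Theorem theorem2p3 (a b c n1 n2 n3 l : Z) :
  n1 * a + n2 * b + n3 * c = 0 ->
  n1 ^ 2 + n2 ^ 2 + n3 ^ 2 = l ^ 2 ->
  exists v : Z * Z * Z,
    dot3 v (n1, n2, n3) = 0 /\
    dot3 v (scale3 l (a, b, c)) = 0 /\
    norm2 v = norm2 (scale3 l (a, b, c)).
Proof.
  intros H1 H2.
  exists (n2 * c - n3 * b, n3 * a - n1 * c, n1 * b - n2 * a).
  unfold norm2, dot3, scale3. split; [ring|]. split; [ring|].
  transitivity ((n1^2+n2^2+n3^2)*(a*a+b*b+c*c) - (n1 * a + n2 * b + n3 * c)^2).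
  - ring.
  - rewrite H1, H2. ring.
Qed.
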